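(* Let $M_s=\mathbf{Sp}(2,\mathbb{R})/\mathbf{SL}(2,\mathbb{R})_s$ with the $\mathbf{Sp}(2,\mathbb{R})$-invariant metric $g_K=2(f^4)^2-2f^3\odot f^5+f^2\odot f^6-4f^1\odot f^7$ (notation as in the context). The most general $\mathbf{Sp}(2,\mathbb{R})$-invariant 3-form $\phi$ on $M_s$ (i.e. of the form $\tfrac16\phi_{\mu\nu\rho}f^\mu\wedge f^\nu\wedge f^\rho$ with constant coefficients, $\mu,\nu,\rho\in\{1,\dots,7\}$, satisfying $\mathcal{L}_X\phi=0$ for all $X$ in $D_s$) such that $(g_K,\phi)$ is compatible is the 1-parameter family $$\phi=2f^{147}+\tfrac12f^{246}+f^{345}+qf^{136}+\frac{1}{q}f^{257},\qquad q\neq0.$$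
   Context: Realize $\mathfrak{sp}(2,\mathbb{R})$ as the real $4\times 4$ matrices $$E=\begin{pmatrix} a_5&a_7&a_9&2a_{10}\\ -a_4&a_6&a_8&a_9\\ a_2&a_3&-a_6&-a_7\\ -2a_1&a_2&a_4&-a_5\end{pmatrix}$$ with basis $E_I=\partial E/\partial a_I$. Put $f_1=E_1,\ f_2=E_3,\ f_3=E_4,\ f_4=E_6-E_5,\ f_5=E_7,\ f_6=E_8,\ f_7=E_{10},\ f_8=E_2,\ f_9=E_5+E_6,\ f_{10}=E_9$, regarded as left-invariant vector fields on $\mathbf{Sp}(2,\mathbb{R})$, with dual left-invariant 1-forms $(f^I)$. $\mathbf{SL}(2,\mathbb{R})_s$ is the subgroup with Lie algebra $\mathrm{Span}(E_2,E_5+E_6,E_9)=\mathrm{Span}(f_8,f_9,f_{10})$; $D_s$ is the distribution spanned by $f_8,f_9,f_{10}$, with leaf space $M_s$; forms in $f^1,\dots,f^7$ with constant coefficients annihilated by $\mathcal{L}_X$, $X\in D_s$, descend to $M_s$. A pair $(g,\phi)$ is compatible if $(f_\mu\lrcorner\phi)\wedge(f_\nu\lrcorner\phi)\wedge\phi=3g(f_\mu,f_\nu)\,f^1\wedge\cdots\wedge f^7$ for all $\mu,\nu=1,\dots,7$. Notation: $f^I\odot f^J=\tfrac12(f^I\otimes f^J+f^J\otimes f^I)$, $(f^I)^2=f^I\odot f^I$, $f^{\mu\nu\rho}=f^\mu\wedge f^\nu\wedge f^\rho$. *)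

(* Defs.v *)
From mathcomp Require Import all_boot all_order all_algebra all_fingroup.
From mathcomp Require Import reals.
Set Implicit Arguments. Unset Strict Implicit. Unset Printing Implicit Defensive.
Import Order.TTheory GRing.Theory Num.Theory.
Local Open Scope ring_scope.

Section Sp2.
Variable R : realType.

(* Indices: the basis vector f_{k+1} of sp(2,R) is indexed by k : 'I_10,
   so 'I_7 indexes f_1..f_7 and k >= 7 indexes f_8, f_9, f_10. *)

Definition Emat (a : nat -> R) : 'M[R]_4 := \matrix_(i < 4, j < 4)
  match nat_of_ord i, nat_of_ord j with
  | 0, 0 => a 5%N | 0, 1 => a 7%N | 0, 2 => a 9%N | 0, _ => 2 * a 10%N
  | 1, 0 => - a 4%N | 1, 1 => a 6%N | 1, 2 => a 8%N | 1, _ => a 9%N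
  | 2, 0 => a 2%N | 2, 1 => a 3%N | 2, 2 => - a 6%N | 2, _ => - a 7%N
  | _, 0 => - 2 * a 1%N | _, 1 => a 2%N | _, 2 => a 4%N | _, _ => - a 5%N
  end.

(* E_I = dE/da_I  (E is linear in a) *)
Definition EI (I : nat) : 'M[R]_4 := Emat (fun k => (k == I)%:R).

Definition fb (k : 'I_10) : 'M[R]_4 :=
  match nat_of_ord k with
  | 0 => EI 1 | 1 => EI 3 | 2 => EI 4 | 3 => EI 6 - EI 5 | 4 => EI 7
  | 5 => EI 8 | 6 => EI 10 | 7 => EI 2 | 8 => EI 5 + EI 6 | _ => EI 9
  end.

Definition mxe (M : 'M[R]_4) (i j : nat) : R := M (inord i) (inord j).
Definition fdual (k : 'I_10) (M : 'M[R]_4) : R :=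
  match nat_of_ord k with
  | 0 => - mxe M 3 0 / 2
  | 1 => mxe M 2 1
  | 2 => - mxe M 1 0
  | 3 => (mxe M 1 1 - mxe M 0 0) / 2
  | 4 => mxe M 0 1
  | 5 => mxe M 1 2
  | 6 => mxe M 0 3 / 2
  | 7 => mxe M 2 0
  | 8 => (mxe M 0 0 + mxe M 1 1) / 2
  | _ => mxe M 0 2
  end.

(* Lie bracket of sp(2,R) (= bracket of the left-invariant vector fields). *)
Definition lieb (A B : 'M[R]_4) : 'M[R]_4 := A *m B - B *m A.

(* A 3-form sum (1/6) phi_{mu nu rho} f^mu ^ f^nu ^ f^rho (mu,nu,rho in 1..7)
   with constant coefficients is given by its totally antisymmetric
   components phi_{mu nu rho} = phi(f_mu, f_nu, f_rho). *)
Definition form3 := 'I_7 -> 'I_7 -> 'I_7 -> R.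
Definition form2 := 'I_7 -> 'I_7 -> R.

Definition antisym3 (phi : form3) : Prop :=
  forall i j k, phi i j k = - phi j i k /\ phi i j k = - phi i k j.

Definition ext3 (phi : form3) (i j k : 'I_10) : R :=
  if [&& (i < 7)%N, (j < 7)%N & (k < 7)%N]
  then phi (inord i) (inord j) (inord k) else 0.

Definition lie_deriv3 (X : 'M[R]_4) (phi : form3) (i j k : 'I_10) : R :=
  - \sum_(l < 10) (fdual l (lieb X (fb i)) * ext3 phi l j k
                   + fdual l (lieb X (fb j)) * ext3 phi i l k
                   + fdual l (lieb X (fb k)) * ext3 phi i j l).

(* L_X phi = 0 for all X in D_s = span(f_8, f_9, f_10). *)
Definition Ds_invariant (phi : form3) : Prop :=
  forall a : 'I_10, (7 <= a)%N -> forall i j k, lie_deriv3 (fb a) phi i j k = 0.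

Definition contr (mu : 'I_7) (phi : form3) : form2 := fun i j => phi mu i j.

(* The coefficient c of alpha ^ beta ^ gamma = c f^1 ^ ... ^ f^7, for
   2-forms alpha, beta and a 3-form gamma (standard wedge convention:
   (alpha^beta^gamma)(f_1..f_7) = 1/(2!2!3!) sum_s sgn(s) alpha(..)beta(..)gamma(..)). *)
Definition o7 (n : nat) : 'I_7 := inord n.
Definition wedge223_top (al be : form2) (ga : form3) : R :=
  (1 / 24) * \sum_(s : 'S_7) (-1) ^+ s *
     al (s (o7 0)) (s (o7 1)) * be (s (o7 2)) (s (o7 3))
     * ga (s (o7 4)) (s (o7 5)) (s (o7 6)).

Definition compatible (g : form2) (phi : form3) : Prop :=
  forall mu nu : 'I_7,
    wedge223_top (contr mu phi) (contr nu phi) phi = 3 * g mu nu.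

(* Symmetric product f^a (.) f^b as a bilinear form (0-based indices). *)
Definition sprod (a b : nat) : form2 := fun i j =>
  (((i == a :> nat) && (j == b :> nat))%:R + ((i == b :> nat) && (j == a :> nat))%:R) / 2.

Definition gK : form2 := fun i j =>
  2 * sprod 3 3 i j - 2 * sprod 2 4 i j + sprod 1 5 i j - 4 * sprod 0 6 i j.

(* f^{abc} = f^a ^ f^b ^ f^c, as a 3-form (0-based indices):
   f^{abc}(f_i,f_j,f_k) = det [f^x(f_y)]. *)
Definition e3 (a b c : nat) : form3 := fun i j k =>
  \det (\matrix_(r < 3, s < 3)
          ((nth 0%N [:: a; b; c] r == nth 0%N [:: nat_of_ord i; nat_of_ord j; nat_of_ord k] s)%:R : R)).

Definition phi_fam (q : R) : form3 := fun i j k =>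
  2 * e3 0 3 6 i j k + (1 / 2) * e3 1 3 5 i j k + e3 2 3 4 i j k
  + q * e3 0 2 5 i j k + q^-1 * e3 1 4 6 i j k.

End Sp2.

(* Main.v *)
Require Import Defs.
From mathcomp Require Import all_boot all_order all_algebra all_fingroup.
From mathcomp Require Import reals ring lra zify.
Import GRing.Theory Num.Theory.
Local Open Scope ring_scope.

Module Helpers.
Set Implicit Arguments. Unset Strict Implicit. Unset Printing Implicit Defensive.

Definition sh (t0 n x : nat) : nat :=
  if (x < t0)%N then x else if x == t0 then n else x.-1.
Fixpoint epsc (n : nat) (t : seq nat) : int :=
  match n, t with
  | 0, _ => 1
  | n'.+1, t0 :: t' => if (t0 < n)%N then (-1) ^+ t0 * epsc n' (map (sh t0 n') t') else 0
  | _, [::] => 0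
  end.

Section G.
Variable R : realType.
Definition Mt n (t : seq nat) : 'M[R]_n := \matrix_(i < n, j < n) ((j == nth 0%N t i :> nat)%:R).

Lemma bump_sh t0 n j x : (j < n)%N -> (bump t0 j == x) = (j == sh t0 n x).
Proof.
move=> jn; rewrite /bump /sh.
case: (ltnP x t0) => h1.
  case: (leqP t0 j) => h2; apply/eqP/eqP; lia.
case: (x =P t0) => h3.
  case: (leqP t0 j) => h2; apply/eqP/eqP; lia.
case: (leqP t0 j) => h2; apply/eqP/eqP; lia.
Qed.

Lemma detMt n t : size t = n -> \det (Mt n t) = (epsc n t)%:~R.
Proof.
elim: n t => [|n IH] t.
  by move=> _; rewrite det_mx00.
case: t => [|t0 t'] //= [st].
rewrite (expand_det_row _ ord0).
case: (ltnP t0 n.+1) => ht0.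
  rewrite (bigD1 (Ordinal ht0)) //= big1; last first.
    move=> j /negbTE hj; rewrite mxE /=.
    have -> : (nat_of_ord j == t0) = false.
      apply/negbTE; apply: contraFN hj => /eqP e; apply/eqP/val_inj => /=; exact: e.
    by rewrite mul0r.
  rewrite addr0 mxE /= eqxx mul1r /cofactor.
  have -> : row' ord0 (col' (Ordinal ht0) (Mt n.+1 (t0 :: t'))) = Mt n (map (sh t0 n) t').
    apply/matrixP => i j; rewrite !mxE /= (nth_map 0%N); last by rewrite st.
    by rewrite (@bump_sh t0 n j _ (ltn_ord j)).
  rewrite IH ?size_map // rmorphM /= rmorphXn /= rmorphN1.
  by rewrite add0n.
rewrite big1; last first.
  move=> j _; rewrite mxE /=.
  have -> : (nat_of_ord j == t0) = false.
    apply/negbTE; move: (ltn_ord j) => hj; apply/eqP; lia.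
  by rewrite mul0r.
by [].
Qed.
End G.

Section G.
Variable R : realType.
Definition lf2 (L : seq (R * (nat * nat))) : form2 R := fun i j =>
  \sum_(e <- L) e.1 * (((i == e.2.1 :> nat) && (j == e.2.2 :> nat))%:R).
Definition lf3 (L : seq (R * (nat * nat * nat))) : form3 R := fun i j k =>
  \sum_(e <- L) e.1 * (((i == e.2.1.1 :> nat) && (j == e.2.1.2 :> nat) && (k == e.2.2 :> nat))%:R).

Lemma prod7 (F : 'I_7 -> R) : \prod_(i < 7) F i =
  F (o7 0) * (F (o7 1) * (F (o7 2) * (F (o7 3) * (F (o7 4) * (F (o7 5) * (F (o7 6) * 1)))))).
Proof.
rewrite !big_ord_recl big_ord0 /o7.
by repeat f_equal; apply/val_inj; rewrite /= inordK.
Qed.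

Lemma sum3M (I J K : Type) (k : R) (A : seq I) (B : seq J) (C : seq K) f g h :
  k * (\sum_(a <- A) f a) * (\sum_(b <- B) g b) * (\sum_(c <- C) h c) =
  \sum_(a <- A) \sum_(b <- B) \sum_(c <- C) (k * f a * g b * h c).
Proof.
symmetry.
under eq_bigr => a _ do under eq_bigr => b _ do rewrite -big_distrr /=.
under eq_bigr => a _ do rewrite -big_distrl /=.
rewrite -big_distrl /=.
under eq_bigr => a _ do rewrite -big_distrr /=.
by rewrite -big_distrl -big_distrr.
Qed.

Lemma wedge_lf La Lb Lg : wedge223_top (lf2 La) (lf2 Lb) (lf3 Lg) = 1/24 *
  \sum_(a <- La) \sum_(b <- Lb) \sum_(g <- Lg) (a.1 * b.1 * g.1 *
     (epsc 7 [:: a.2.1; a.2.2; b.2.1; b.2.2; g.2.1.1; g.2.1.2; g.2.2])%:~R).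
Proof.
rewrite /wedge223_top; congr (_ * _).
transitivity (\sum_(s : 'S_7) \sum_(a <- La) \sum_(b <- Lb) \sum_(g <- Lg)
   ((-1) ^+ s * (a.1 * (((s (o7 0) == a.2.1 :> nat) && (s (o7 1) == a.2.2 :> nat))%:R))
    * (b.1 * (((s (o7 2) == b.2.1 :> nat) && (s (o7 3) == b.2.2 :> nat))%:R))
    * (g.1 * (((s (o7 4) == g.2.1.1 :> nat) && (s (o7 5) == g.2.1.2 :> nat) && (s (o7 6) == g.2.2 :> nat))%:R)))).
  apply: eq_bigr => s _.
  by rewrite /lf2 /lf3 sum3M.
rewrite exchange_big; apply: eq_bigr => a _.
rewrite exchange_big; apply: eq_bigr => b _.
rewrite exchange_big; apply: eq_bigr => g _.
rewrite -detMt //= /determinant big_distrr /=; apply: eq_bigr => s _.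
rewrite prod7 !mxE /o7 !inordK //; cbn [nth].
move: ((-1) ^+ s) => sg.
move: (s (inord 0) == a.2.1 :> nat) (s (inord 1) == a.2.2 :> nat) (s (inord 2) == b.2.1 :> nat) (s (inord 3) == b.2.2 :> nat) => [] [] [] [];
move: (s (inord 4) == g.2.1.1 :> nat) (s (inord 5) == g.2.1.2 :> nat) (s (inord 6) == g.2.2 :> nat) => [] [] []; rewrite /=; ring.
Qed.
End G.

Definition sumZ {T} (L : seq T) (F : T -> int) : int := foldr (fun x acc => F x + acc) 0 L.
Definition LBZ (n : nat) : seq (int * (nat * nat * nat)) :=
  match n with
  | 0 => [:: ((Posz 1), (0, 2, 5)); ((Negz 0), (0, 5, 2)); ((Negz 0), (2, 0, 5)); ((Posz 1), (2, 5, 0)); ((Posz 1), (5, 0, 2)); ((Negz 0), (5, 2, 0))]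
  | 1 => [:: ((Negz 3), (0, 2, 6)); ((Posz 4), (0, 6, 2)); ((Posz 4), (2, 0, 6)); ((Negz 3), (2, 6, 0)); ((Negz 3), (6, 0, 2)); ((Posz 4), (6, 2, 0)); ((Posz 2), (0, 4, 5)); ((Negz 1), (0, 5, 4)); ((Negz 1), (4, 0, 5)); ((Posz 2), (4, 5, 0)); ((Posz 2), (5, 0, 4)); ((Negz 1), (5, 4, 0)); ((Posz 1), (1, 2, 5)); ((Negz 0), (1, 5, 2)); ((Negz 0), (2, 1, 5)); ((Posz 1), (2, 5, 1)); ((Posz 1), (5, 1, 2)); ((Negz 0), (5, 2, 1))]
  | 2 => [:: ((Negz 3), (0, 4, 6)); ((Posz 4), (0, 6, 4)); ((Posz 4), (4, 0, 6)); ((Negz 3), (4, 6, 0)); ((Negz 3), (6, 0, 4)); ((Posz 4), (6, 4, 0)); ((Negz 1), (1, 2, 6)); ((Posz 2), (1, 6, 2)); ((Posz 2), (2, 1, 6)); ((Negz 1), (2, 6, 1)); ((Negz 1), (6, 1, 2)); ((Posz 2), (6, 2, 1)); ((Posz 1), (1, 4, 5)); ((Negz 0), (1, 5, 4)); ((Negz 0), (4, 1, 5)); ((Posz 1), (4, 5, 1)); ((Posz 1), (5, 1, 4)); ((Negz 0), (5, 4, 1))]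
  | 3 => [:: ((Posz 1), (1, 4, 6)); ((Negz 0), (1, 6, 4)); ((Negz 0), (4, 1, 6)); ((Posz 1), (4, 6, 1)); ((Posz 1), (6, 1, 4)); ((Negz 0), (6, 4, 1))]
  | _ => [:: ((Posz 4), (0, 3, 6)); ((Negz 3), (0, 6, 3)); ((Negz 3), (3, 0, 6)); ((Posz 4), (3, 6, 0)); ((Posz 4), (6, 0, 3)); ((Negz 3), (6, 3, 0)); ((Posz 1), (1, 3, 5)); ((Negz 0), (1, 5, 3)); ((Negz 0), (3, 1, 5)); ((Posz 1), (3, 5, 1)); ((Posz 1), (5, 1, 3)); ((Negz 0), (5, 3, 1)); ((Posz 2), (2, 3, 4)); ((Negz 1), (2, 4, 3)); ((Negz 1), (3, 2, 4)); ((Posz 2), (3, 4, 2)); ((Posz 2), (4, 2, 3)); ((Negz 1), (4, 3, 2))]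
  end.
Definition BZ (n i j k : nat) : int :=
  sumZ (LBZ n) (fun e => if (i, j, k) == e.2 then e.1 else 0).
Definition contrL (mu : nat) (L : seq (int * (nat * nat * nat))) : seq (int * (nat * nat)) :=
  [seq (e.1, (e.2.1.2, e.2.2)) | e <- L & e.2.1.1 == mu].
Definition WZl (La Lb : seq (int * (nat * nat))) (Lg : seq (int * (nat * nat * nat))) : int :=
  sumZ La (fun a => sumZ Lb (fun b => sumZ Lg (fun g =>
    a.1 * b.1 * g.1 * epsc 7 [:: a.2.1; a.2.2; b.2.1; b.2.2; g.2.1.1; g.2.1.2; g.2.2]))).
Definition WZ (mu nu n m p : nat) : int := WZl (contrL mu (LBZ n)) (contrL nu (LBZ m)) (LBZ p).
Definition trip5 : seq (nat * nat * nat) :=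
  [seq (nm, p) | nm <- [seq (n, m) | n <- iota 0 5, m <- iota 0 5], p <- iota 0 5].
Definition WL (mu nu : nat) : seq (nat * nat * nat * int) :=
  filter (fun u => u.2 != 0) (map (fun t => (t, WZ mu nu t.1.1 t.1.2 t.2)) trip5).

Definition EF (b : nat -> int) (i j : nat) : int :=
  match i, j with
  | 0, 0 => b 5%N | 0, 1 => b 7%N | 0, 2 => b 9%N | 0, _ => 2 * b 10%N
  | 1, 0 => - b 4%N | 1, 1 => b 6%N | 1, 2 => b 8%N | 1, _ => b 9%N
  | 2, 0 => b 2%N | 2, 1 => b 3%N | 2, 2 => - b 6%N | 2, _ => - b 7%N
  | _, 0 => - 2 * b 1%N | _, 1 => b 2%N | _, 2 => b 4%N | _, _ => - b 5%N
  end.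
Definition EIF (I i j : nat) : int := EF (fun k => (k == I)%:Z) i j.
Definition fbF (k i j : nat) : int :=
  match k with
  | 0 => EIF 1 i j | 1 => EIF 3 i j | 2 => EIF 4 i j | 3 => EIF 6 i j - EIF 5 i j
  | 4 => EIF 7 i j | 5 => EIF 8 i j | 6 => EIF 10 i j | 7 => EIF 2 i j
  | 8 => EIF 5 i j + EIF 6 i j | _ => EIF 9 i j
  end.
Definition liebF (a b i j : nat) : int :=
  (fbF a i 0 * fbF b 0 j + (fbF a i 1 * fbF b 1 j + (fbF a i 2 * fbF b 2 j + (fbF a i 3 * fbF b 3 j + 0))))
  - (fbF b i 0 * fbF a 0 j + (fbF b i 1 * fbF a 1 j + (fbF b i 2 * fbF a 2 j + (fbF b i 3 * fbF a 3 j + 0)))).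
Definition fd2 (l : nat) (M : nat -> nat -> int) : int :=
  match l with
  | 0 => - M 3%N 0%N | 1 => 2 * M 2%N 1%N | 2 => - (2 * M 1%N 0%N) | 3 => M 1%N 1%N - M 0%N 0%N
  | 4 => 2 * M 0%N 1%N | 5 => 2 * M 1%N 2%N | 6 => M 0%N 3%N | 7 => 2 * M 2%N 0%N
  | 8 => M 0%N 0%N + M 1%N 1%N | _ => 2 * M 0%N 2%N
  end.
Definition ctab (a i l : nat) : int := fd2 l (liebF a i).

Definition srt3 (i j k : nat) : nat * (nat * nat * nat) :=
  if [|| i == j, j == k | i == k] then (0%N, (i, j, k)) else
  if (i < j)%N then
    (if (j < k)%N then (1%N, (i, j, k)) else if (i < k)%N then (2%N, (i, k, j)) else (1%N, (k, i, j)))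
  else
    (if (i < k)%N then (2%N, (j, i, k)) else if (j < k)%N then (1%N, (j, k, i)) else (2%N, (k, j, i))).
Definition sgZ (c : nat) : int := match c with 0 => Posz 0 | 1 => Posz 1 | _ => Negz 0 end.
Definition all7 (i j k : nat) : bool := [&& (i < 7)%N, (j < 7)%N & (k < 7)%N].
Definition trip343 : seq (nat * nat * nat) :=
  [seq (ij, k) | ij <- [seq (i, j) | i <- iota 0 7, j <- iota 0 7], k <- iota 0 7].
Definition trip35 : seq (nat * nat * nat) :=
  filter (fun t => (t.1.1 < t.1.2 < t.2)%N) trip343.
Definition E3U (t : nat * nat * nat) (l j k : nat) : int :=
  if all7 l j k then (if (srt3 l j k).2 == t then sgZ (srt3 l j k).1 else 0) else 0.
Definition E3Z (n l j k : nat) : int := if all7 l j k then BZ n l j k else 0.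
Definition LG {U} (G : U -> nat -> nat -> nat -> int) (a : nat) (u : U) (i j k : nat) : int :=
  sumZ (iota 0 10) (fun l => ctab a i l * G u l j k + ctab a j l * G u i l k + ctab a k l * G u i j l).

Section G.
Variable R : realType.

Lemma Emat_int (b : nat -> int) :
  Emat (fun k => (b k)%:~R : R) = \matrix_(i < 4, j < 4) (EF b i j)%:~R.
Proof.
apply/matrixP => i j; rewrite !mxE.
case: i => [[|[|[|[|?]]]] ?]; case: j => [[|[|[|[|?]]]] ?] //=; rewrite ?intrM ?intrN //.
Qed.

Lemma EI_int I : EI R I = \matrix_(i < 4, j < 4) (EIF I i j)%:~R.
Proof.
have -> : EI R I = Emat (fun k => ((k == I)%:Z)%:~R) by [].
by rewrite Emat_int.
Qed.

Lemma fb_int k : fb R k = \matrix_(i < 4, j < 4) (fbF k i j)%:~R.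
Proof.
case: k => [[|[|[|[|[|[|[|[|[|[|?]]]]]]]]]] ?] //=; rewrite /fb /= ?EI_int //;
  apply/matrixP => i j; rewrite !mxE ?intrD ?intrB ?intrN //.
Qed.

Lemma lieb_int a b : lieb (fb R a) (fb R b) = \matrix_(i < 4, j < 4) (liebF a b i j)%:~R.
Proof.
rewrite /lieb !fb_int; apply/matrixP => i j; rewrite !mxE !big_ord_recl !big_ord0 !mxE /=.
rewrite /bump /= ?addn0 ?add1n /liebF !(intrD, intrB, intrM, intrN); ring.
Qed.

Lemma cE a i l : fdual l (lieb (fb R a) (fb R i)) = (ctab a i l)%:~R / 2.
Proof.
rewrite lieb_int /fdual /mxe !mxE !inordK // /ctab /fd2.
case: l => [[|[|[|[|[|[|[|[|[|[|?]]]]]]]]]] ?] //=; rewrite ?(intrD, intrB, intrM, intrN). all: field; done.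
Qed.
End G.

Section G.
Variable R : realType.

Lemma sumZ_R (T : Type) (L : seq T) (F : T -> int) :
  (sumZ L F)%:~R = \sum_(x <- L) ((F x)%:~R : R).
Proof. by elim: L => [|x L IH]; rewrite ?big_nil ?big_cons //= intrD IH. Qed.

Lemma iota10 (F : nat -> R) : \sum_(l <- iota 0 10) F l = \sum_(l < 10) F l.
Proof. by change (iota 0 10) with (index_iota 0 10); rewrite big_mkord. Qed.

Lemma LDE_gen (phi : form3 R) (U : Type) (r : seq U) (y : U -> R)
  (G : U -> nat -> nat -> nat -> int) :
  (forall l j k : 'I_10, ext3 phi l j k = \sum_(u <- r) y u * (G u l j k)%:~R) ->
  forall a i j k : 'I_10, lie_deriv3 (fb R a) phi i j k =
     - (1 / 2) * \sum_(u <- r) y u * (LG G a u i j k)%:~R.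
Proof.
move=> H a i j k; rewrite /lie_deriv3.
under eq_bigr => l _ do rewrite !cE !H.
rewrite mulNr; congr (- _).
symmetry. rewrite /LG.
under [X in _ * X = _]eq_bigr => u _ do rewrite sumZ_R iota10 big_distrr /=.
rewrite big_distrr /=.
under eq_bigr => u _ do rewrite big_distrr /=.
rewrite exchange_big; apply: eq_bigr => l _.
rewrite !big_distrr /= -!big_split /=; apply: eq_bigr => u _.
rewrite !(intrD, intrM); field; done.
Qed.
End G.

Lemma all3P (P : nat -> nat -> nat -> bool) n :
  all (fun i => all (fun j => all (fun k => P i j k) (iota 0 n)) (iota 0 n)) (iota 0 n) ->
  forall i j k, (i < n)%N -> (j < n)%N -> (k < n)%N -> P i j k.
Proof.
move=> /allP H i j k hi hj hk.
have mi : forall x, (x < n)%N -> x \in iota 0 n by move=> x hx; rewrite mem_iota leq0n add0n.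
have /allP H1 := H i (mi _ hi).
have /allP H2 := H1 j (mi _ hj).
exact: H2 k (mi _ hk).
Qed.

Lemma srt3_in_check : all (fun i => all (fun j => all (fun k =>
  ((srt3 i j k).1 == 0%N) || ((srt3 i j k).2 \in trip35)) (iota 0 7)) (iota 0 7)) (iota 0 7).
Proof. by vm_compute. Qed.

Lemma srt3_in i j k : (i < 7)%N -> (j < 7)%N -> (k < 7)%N ->
  (srt3 i j k).1 != 0%N -> (srt3 i j k).2 \in trip35.
Proof.
move=> hi hj hk; have := all3P srt3_in_check hi hj hk.
by case: eqP.
Qed.

Lemma trip35_uniq : uniq trip35.
Proof. by vm_compute. Qed.

Section G.
Variable R : realType.
Definition V (phi : form3 R) (t : nat * nat * nat) : R := phi (o7 t.1.1) (o7 t.1.2) (o7 t.2).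

Lemma AS (phi : form3 R) : antisym3 phi -> forall i j k : 'I_7,
  phi i j k = (sgZ (srt3 i j k).1)%:~R * V phi (srt3 i j k).2.
Proof.
move=> hA i j k.
have s12 : forall a b c, phi a b c = - phi b a c := fun a b c => (hA a b c).1.
have s23 : forall a b c, phi a b c = - phi a c b := fun a b c => (hA a b c).2.
have z12 : forall a c, phi a a c = 0 by move=> a c; have := s12 a a c; lra.
have z23 : forall a b, phi a b b = 0 by move=> a b; have := s23 a b b; lra.
have z13 : forall a b, phi a b a = 0 by move=> a b; rewrite s12 z23 oppr0.
have iv : forall a : 'I_7, o7 a = a := fun a => inord_val a.
rewrite /srt3 /V.
have [eij|nij] := eqVneq (i : nat) j.
  have e : i = j by apply: val_inj.
  by rewrite e /= z12 mul0r.
have [ejk|njk] := eqVneq (j : nat) k.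
  have e : j = k by apply: val_inj.
  by rewrite e /= ?orbT /= z23 mul0r.
have [eik|nik] := eqVneq (i : nat) k.
  have e : i = k by apply: val_inj.
  by rewrite e /= ?orbT /= z13 mul0r.
rewrite /=.
case: ifP => _.
  case: ifP => _; first by rewrite /= !iv mul1r.
  case: ifP => _; first by rewrite /= !iv s23 mulN1r.
  by rewrite /= !iv mul1r (s12 k i j) (s23 i k j) opprK.
case: ifP => _; first by rewrite /= !iv s12 mulN1r.
case: ifP => _; first by rewrite /= !iv mul1r (s23 j k i) (s12 j i k) opprK.
by rewrite /= !iv mulN1r (s12 k j i) (s23 j k i) (s12 j i k) !opprK.
Qed.

Lemma ext3_V (phi : form3 R) : antisym3 phi -> forall l j k : 'I_10,
  ext3 phi l j k = \sum_(t <- trip35) V phi t * (E3U t l j k)%:~R.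
Proof.
move=> hA l j k; rewrite /ext3 /E3U /all7.
case: ifP => h; last first.
  by rewrite big1 // => t _; rewrite mulr0z mulr0.
move/and3P: h => [hl hj hk].
rewrite (AS hA (inord l) (inord j) (inord k)) !inordK //.
set s := srt3 l j k.
have [hs|hs] := eqVneq s.1 0%N.
  rewrite hs mul0r big1 // => t _.
  by rewrite if_same mulr0z mulr0.
rewrite (bigD1_seq s.2 (srt3_in hl hj hk hs) trip35_uniq).
rewrite eqxx big1.
  by change ((sgZ s.1)%:~R * V phi s.2 = V phi s.2 * (sgZ s.1)%:~R + 0); rewrite addr0 mulrC.
move=> t ht; have -> : (s.2 == t) = false by apply/negbTE; rewrite eq_sym.
by rewrite mulr0z mulr0.
Qed.
End G.

Definition dZ (x y : nat) : int := (x == y)%:Z.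
Definition e3Z (a b c i j k : nat) : int :=
  dZ a i * (dZ b j * dZ c k - dZ b k * dZ c j) - dZ a j * (dZ b i * dZ c k - dZ b k * dZ c i)
  + dZ a k * (dZ b i * dZ c j - dZ b j * dZ c i).

Definition LGcheck : bool :=
  all (fun a => all (fun n => all (fun i => all (fun j => all (fun k => LG E3Z a n i j k == 0)
    (iota 0 10)) (iota 0 10)) (iota 0 10)) (iota 0 5)) [:: 7; 8; 9]%N.
Lemma LGcheckT : LGcheck. Proof. by vm_compute. Qed.

Lemma LG0 a n i j k : a \in [:: 7; 8; 9]%N -> (n < 5)%N -> (i < 10)%N -> (j < 10)%N -> (k < 10)%N ->
  LG E3Z a n i j k = 0.
Proof.
move=> ha hn hi hj hk.
have mi : forall y, (y < 5)%N -> y \in iota 0 5 by move=> y hy; rewrite mem_iota leq0n add0n.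
have := LGcheckT; rewrite /LGcheck => /allP /(_ a ha) /allP /(_ n (mi _ hn)) H.
by have /eqP := all3P H hi hj hk.
Qed.

Section G.
Variable R : realType.

Lemma det3f (f : nat -> nat -> R) : \det (\matrix_(r < 3, s < 3) f r s) =
  f 0 0 * (f 1 1 * f 2 2 - f 1 2 * f 2 1) - f 0 1 * (f 1 0 * f 2 2 - f 1 2 * f 2 0)
  + f 0 2 * (f 1 0 * f 2 1 - f 1 1 * f 2 0).
Proof.
rewrite (expand_det_row _ ord0) !big_ord_recl big_ord0 /cofactor.
rewrite !(expand_det_row _ ord0) !big_ord_recl !big_ord0 /cofactor !det_mx11 !mxE /=.
rewrite /bump /= ?addn0 ?add1n ?add0n.
ring.
Qed.

Lemma e3_int a b c (i j k : 'I_7) : e3 R a b c i j k = (e3Z a b c i j k)%:~R.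
Proof.
rewrite /e3 (det3f (fun r s => ((nth 0%N [:: a; b; c] r == nth 0%N [:: nat_of_ord i; nat_of_ord j; nat_of_ord k] s)%:R))).
rewrite /e3Z /dZ /= !(intrD, intrB, intrM, intrN).
by [].
Qed.

Definition Phi (x : nat -> R) : form3 R := fun i j k =>
  \sum_(n <- iota 0 5) x n * (BZ n i j k)%:~R.

Lemma ext3_Phi x (l j k : 'I_10) :
  ext3 (Phi x) l j k = \sum_(n <- iota 0 5) x n * (E3Z n l j k)%:~R.
Proof.
rewrite /ext3 /E3Z /all7; case: ifP => h; last first.
  by rewrite big1 // => n _; rewrite mulr0z mulr0.
by move/and3P: h => [hl hj hk]; rewrite /Phi !inordK.
Qed.

Lemma Ds_inv_Phi x : Ds_invariant (Phi x).
Proof.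
move=> a ha i j k.
rewrite (LDE_gen (ext3_Phi x)) big_seq big1 ?mulr0 // => n.
rewrite mem_iota leq0n add0n => hn.
have ha' : (a : nat) \in [:: 7; 8; 9]%N.
  by rewrite !inE; move: (ltn_ord a) ha; lia.
by rewrite (LG0 ha' hn (ltn_ord i) (ltn_ord j) (ltn_ord k)) mulr0z mulr0.
Qed.
End G.

Section G.
Variable R : realType.
Definition RL2 (L : seq (int * (nat * nat))) : seq (R * (nat * nat)) := map (fun e => (e.1%:~R, e.2)) L.
Definition RL3 (L : seq (int * (nat * nat * nat))) : seq (R * (nat * nat * nat)) := map (fun e => (e.1%:~R, e.2)) L.

Lemma BZ_lf3 n (i j k : 'I_7) : (BZ n i j k)%:~R = lf3 (RL3 (LBZ n)) i j k.
Proof.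
rewrite /BZ sumZ_R /lf3 /RL3 big_map; apply: eq_bigr => -[c [[a b] d]] _ /=.
rewrite !xpair_eqE; case: (nat_of_ord i == a); case: (nat_of_ord j == b); case: (nat_of_ord k == d);
  by rewrite /= ?mulr1 ?mulr0.
Qed.

Lemma BZ_lf2 n (mu i j : 'I_7) : (BZ n mu i j)%:~R = lf2 (RL2 (contrL mu (LBZ n))) i j.
Proof.
rewrite /BZ sumZ_R /lf2 /RL2 /contrL !big_map big_filter [RHS]big_mkcond /=; apply: eq_bigr => -[c [[a b] d]] _ /=.
rewrite !xpair_eqE [a == _]eq_sym; case: (nat_of_ord mu == a); case: (nat_of_ord i == b); case: (nat_of_ord j == d);
  by rewrite /= ?mulr1 ?mulr0.
Qed.

Lemma eq_wedge (al al' be be' : form2 R) (ga ga' : form3 R) :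
  (forall i j, al i j = al' i j) -> (forall i j, be i j = be' i j) ->
  (forall i j k, ga i j k = ga' i j k) ->
  wedge223_top al be ga = wedge223_top al' be' ga'.
Proof.
move=> h1 h2 h3; rewrite /wedge223_top; congr (_ * _); apply: eq_bigr => s _.
by rewrite h1 h2 h3.
Qed.

Lemma swap4 (F : 'S_7 -> nat -> nat -> nat -> R) (r : seq nat) :
  \sum_(s : 'S_7) \sum_(n <- r) \sum_(m <- r) \sum_(p <- r) F s n m p =
  \sum_(n <- r) \sum_(m <- r) \sum_(p <- r) \sum_(s : 'S_7) F s n m p.
Proof.
rewrite exchange_big; apply: eq_bigr => n _.
rewrite exchange_big; apply: eq_bigr => m _.
by rewrite exchange_big.
Qed.

Lemma wedge_tri (r : seq nat) (x : nat -> R) (A B : nat -> form2 R) (C : nat -> form3 R) :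
  wedge223_top (fun i j => \sum_(n <- r) x n * A n i j) (fun i j => \sum_(m <- r) x m * B m i j)
     (fun i j k => \sum_(p <- r) x p * C p i j k) =
  \sum_(n <- r) \sum_(m <- r) \sum_(p <- r) (x n * x m * x p * wedge223_top (A n) (B m) (C p)).
Proof.
rewrite /wedge223_top.
under eq_bigr => s _ do rewrite sum3M.
rewrite swap4 big_distrr /=; apply: eq_bigr => n _.
rewrite big_distrr /=; apply: eq_bigr => m _.
rewrite big_distrr /=; apply: eq_bigr => p _.
rewrite !big_distrr /=; apply: eq_bigr => s _.
move: ((-1) ^+ s) (A n _ _) (B m _ _) (C p _ _ _) => sg a b c.
ring.
Qed.

Lemma wedge_Z La Lb Lg : wedge223_top (lf2 (RL2 La)) (lf2 (RL2 Lb)) (lf3 (RL3 Lg)) =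
  1 / 24 * (WZl La Lb Lg)%:~R.
Proof.
rewrite wedge_lf /WZl sumZ_R /RL2 /RL3 big_map; congr (_ * _); apply: eq_bigr => a _.
rewrite sumZ_R big_map; apply: eq_bigr => b _.
rewrite sumZ_R big_map; apply: eq_bigr => g _.
by rewrite /= !intrM.
Qed.

Lemma sum_filter0 (I : Type) (r : seq I) (P : pred I) (F : I -> R) :
  (forall i, ~~ P i -> F i = 0) -> \sum_(i <- r | P i) F i = \sum_(i <- r) F i.
Proof.
move=> H; rewrite big_mkcond; apply: eq_bigr => i _.
by case: ifP => // /negbT /H ->.
Qed.

Lemma sum_WL (x : nat -> R) mu nu :
  \sum_(n <- iota 0 5) \sum_(m <- iota 0 5) \sum_(p <- iota 0 5)
     (x n * x m * x p * (1 / 24 * (WZ mu nu n m p)%:~R)) =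
  1 / 24 * \sum_(u <- WL mu nu) (x u.1.1.1 * x u.1.1.2 * x u.1.2 * (u.2)%:~R).
Proof.
rewrite /WL big_filter big_map [X in _ = _ * X]sum_filter0; last first.
  by move=> t /= /negPn /eqP ->; rewrite mulr0.
rewrite /trip5 !big_allpairs big_distrr /=.
apply: eq_bigr => n _; rewrite big_distrr /=; apply: eq_bigr => m _.
rewrite big_distrr /=; apply: eq_bigr => p _ /=.
ring.
Qed.

Lemma wedge_Phi (x : nat -> R) (mu nu : 'I_7) :
  wedge223_top (contr mu (Phi x)) (contr nu (Phi x)) (Phi x) =
  1 / 24 * \sum_(u <- WL mu nu) (x u.1.1.1 * x u.1.1.2 * x u.1.2 * (u.2)%:~R).
Proof.
rewrite -sum_WL.
rewrite (@eq_wedge _ (fun i j => \sum_(n <- iota 0 5) x n * lf2 (RL2 (contrL mu (LBZ n))) i j)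
   _ (fun i j => \sum_(n <- iota 0 5) x n * lf2 (RL2 (contrL nu (LBZ n))) i j)
   _ (fun i j k => \sum_(n <- iota 0 5) x n * lf3 (RL3 (LBZ n)) i j k)); first last.
- by move=> i j k; rewrite /Phi; apply: eq_bigr => n _; rewrite BZ_lf3.
- by move=> i j; rewrite /contr /Phi; apply: eq_bigr => n _; rewrite BZ_lf2.
- by move=> i j; rewrite /contr /Phi; apply: eq_bigr => n _; rewrite BZ_lf2.
rewrite wedge_tri; apply: eq_bigr => n _; apply: eq_bigr => m _; apply: eq_bigr => p _.
by rewrite wedge_Z.
Qed.
End G.

Definition EqL (a i j k : nat) : seq (nat * nat * nat * int) :=
  filter (fun u => u.2 != 0) (map (fun t => (t, LG E3U a t i j k)) trip35).

Ltac vmc t := let v := eval vm_compute in t in rewrite (_ : t = v); last by vm_compute.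
Ltac vmc_BZ := repeat match goal with |- context [BZ ?n ?a ?b ?c] => vmc (BZ n a b c) end.
Ltac vmc_EqL H := match type of H with context [EqL ?a ?i ?j ?k] =>
  let v := eval vm_compute in (EqL a i j k) in rewrite (_ : EqL a i j k = v) in H; last by vm_compute end.

Definition BZanti : bool := all (fun n => all (fun i => all (fun j => all (fun k =>
  (BZ n i j k == - BZ n j i k) && (BZ n i j k == - BZ n i k j)) (iota 0 7)) (iota 0 7)) (iota 0 7)) (iota 0 5).
Lemma BZantiT : BZanti. Proof. by vm_compute. Qed.

Section G.
Variable R : realType.

Lemma inv_eq (phi : form3 R) : antisym3 phi -> Ds_invariant phi ->
  forall a i j k : nat, (7 <= a)%N -> (a < 10)%N -> (i < 10)%N -> (j < 10)%N -> (k < 10)%N ->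
  \sum_(u <- EqL a i j k) V phi u.1 * (u.2)%:~R = 0.
Proof.
move=> hA hinv a i j k ha ha' hi hj hk.
have ha2 : (7 <= (inord a : 'I_10))%N by rewrite inordK.
have := hinv (inord a) ha2 (inord i) (inord j) (inord k).
rewrite (LDE_gen (ext3_V hA)) !inordK // => /eqP.
rewrite mulf_eq0 oppr_eq0 => /orP [/eqP h|/eqP h]; first by move: h; lra.
rewrite /EqL big_filter big_map sum_filter0; first exact: h.
by move=> t /= /negPn /eqP ->; rewrite mulr0.
Qed.

Lemma Phi_anti (x : nat -> R) : antisym3 (Phi x).
Proof.
move=> i j k; split; rewrite /Phi -sumrN [LHS]big_seq [RHS]big_seq; apply: eq_bigr => n hn;
  rewrite -mulrN -intrN; congr (_ * _%:~R);
  have := BZantiT; rewrite /BZanti => /allP /(_ n hn) H;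
  have /andP [/eqP h1 /eqP h2] := all3P H (ltn_ord i) (ltn_ord j) (ltn_ord k); by [].
Qed.

Lemma VPhi (x : nat -> R) a b c : (a < 7)%N -> (b < 7)%N -> (c < 7)%N ->
  V (Phi x) (a, b, c) = \sum_(n <- iota 0 5) x n * (BZ n a b c)%:~R.
Proof. by move=> ha hb hc; rewrite /V /Phi /o7 /= !inordK. Qed.

Lemma form_eq (phi psi : form3 R) : antisym3 phi -> antisym3 psi ->
  (forall t, t \in trip35 -> V phi t = V psi t) -> forall i j k, phi i j k = psi i j k.
Proof.
move=> h1 h2 H i j k; rewrite (AS h1) (AS h2).
have [h|h] := eqVneq (srt3 i j k).1 0%N; first by rewrite h !mul0r.
by rewrite H // srt3_in.
Qed.

Lemma all_in (T : eqType) (P : T -> Prop) (L : seq T) :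
  foldr (fun t acc => P t /\ acc) True L -> forall t, t \in L -> P t.
Proof.
elim: L => [|a L IH] //= [Pa HL] t; rewrite inE => /orP [/eqP ->|] //.
exact: IH.
Qed.

Definition xV (phi : form3 R) (n : nat) : R :=
  match n with 0 => V phi (0, 2, 5)%N | 1 => V phi (1, 2, 5)%N | 2 => V phi (1, 4, 5)%N
  | 3 => V phi (1, 4, 6)%N | _ => V phi (2, 3, 4)%N / 2 end.

Lemma determine (phi : form3 R) : antisym3 phi -> Ds_invariant phi ->
  forall t, t \in trip35 -> V phi t = V (Phi (xV phi)) t.
Proof.
move=> hA hinv.
have e0 := inv_eq hA hinv (a:=8) (i:=0) (j:=1) (k:=2) isT isT isT isT isT; vmc_EqL e0; rewrite !big_cons big_nil in e0; cbn [fst snd] in e0.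
have e1 := inv_eq hA hinv (a:=8) (i:=0) (j:=1) (k:=3) isT isT isT isT isT; vmc_EqL e1; rewrite !big_cons big_nil in e1; cbn [fst snd] in e1.
have e2 := inv_eq hA hinv (a:=8) (i:=0) (j:=1) (k:=4) isT isT isT isT isT; vmc_EqL e2; rewrite !big_cons big_nil in e2; cbn [fst snd] in e2.
have e3 := inv_eq hA hinv (a:=8) (i:=0) (j:=1) (k:=5) isT isT isT isT isT; vmc_EqL e3; rewrite !big_cons big_nil in e3; cbn [fst snd] in e3.
have e4 := inv_eq hA hinv (a:=8) (i:=0) (j:=1) (k:=6) isT isT isT isT isT; vmc_EqL e4; rewrite !big_cons big_nil in e4; cbn [fst snd] in e4.
have e5 := inv_eq hA hinv (a:=8) (i:=0) (j:=2) (k:=3) isT isT isT isT isT; vmc_EqL e5; rewrite !big_cons big_nil in e5; cbn [fst snd] in e5.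
have e6 := inv_eq hA hinv (a:=8) (i:=0) (j:=2) (k:=4) isT isT isT isT isT; vmc_EqL e6; rewrite !big_cons big_nil in e6; cbn [fst snd] in e6.
have e7 := inv_eq hA hinv (a:=8) (i:=0) (j:=3) (k:=4) isT isT isT isT isT; vmc_EqL e7; rewrite !big_cons big_nil in e7; cbn [fst snd] in e7.
have e8 := inv_eq hA hinv (a:=8) (i:=0) (j:=5) (k:=6) isT isT isT isT isT; vmc_EqL e8; rewrite !big_cons big_nil in e8; cbn [fst snd] in e8.
have e9 := inv_eq hA hinv (a:=8) (i:=1) (j:=2) (k:=3) isT isT isT isT isT; vmc_EqL e9; rewrite !big_cons big_nil in e9; cbn [fst snd] in e9.
have e10 := inv_eq hA hinv (a:=8) (i:=1) (j:=2) (k:=4) isT isT isT isT isT; vmc_EqL e10; rewrite !big_cons big_nil in e10; cbn [fst snd] in e10.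
have e11 := inv_eq hA hinv (a:=8) (i:=1) (j:=3) (k:=4) isT isT isT isT isT; vmc_EqL e11; rewrite !big_cons big_nil in e11; cbn [fst snd] in e11.
have e12 := inv_eq hA hinv (a:=8) (i:=1) (j:=5) (k:=6) isT isT isT isT isT; vmc_EqL e12; rewrite !big_cons big_nil in e12; cbn [fst snd] in e12.
have e13 := inv_eq hA hinv (a:=8) (i:=2) (j:=3) (k:=5) isT isT isT isT isT; vmc_EqL e13; rewrite !big_cons big_nil in e13; cbn [fst snd] in e13.
have e14 := inv_eq hA hinv (a:=8) (i:=2) (j:=3) (k:=6) isT isT isT isT isT; vmc_EqL e14; rewrite !big_cons big_nil in e14; cbn [fst snd] in e14.
have e15 := inv_eq hA hinv (a:=8) (i:=2) (j:=4) (k:=5) isT isT isT isT isT; vmc_EqL e15; rewrite !big_cons big_nil in e15; cbn [fst snd] in e15.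
have e16 := inv_eq hA hinv (a:=8) (i:=2) (j:=4) (k:=6) isT isT isT isT isT; vmc_EqL e16; rewrite !big_cons big_nil in e16; cbn [fst snd] in e16.
have e17 := inv_eq hA hinv (a:=8) (i:=2) (j:=5) (k:=6) isT isT isT isT isT; vmc_EqL e17; rewrite !big_cons big_nil in e17; cbn [fst snd] in e17.
have e18 := inv_eq hA hinv (a:=8) (i:=3) (j:=4) (k:=5) isT isT isT isT isT; vmc_EqL e18; rewrite !big_cons big_nil in e18; cbn [fst snd] in e18.
have e19 := inv_eq hA hinv (a:=8) (i:=3) (j:=4) (k:=6) isT isT isT isT isT; vmc_EqL e19; rewrite !big_cons big_nil in e19; cbn [fst snd] in e19.
have e20 := inv_eq hA hinv (a:=8) (i:=3) (j:=5) (k:=6) isT isT isT isT isT; vmc_EqL e20; rewrite !big_cons big_nil in e20; cbn [fst snd] in e20.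
have e21 := inv_eq hA hinv (a:=8) (i:=4) (j:=5) (k:=6) isT isT isT isT isT; vmc_EqL e21; rewrite !big_cons big_nil in e21; cbn [fst snd] in e21.
have e22 := inv_eq hA hinv (a:=7) (i:=0) (j:=5) (k:=6) isT isT isT isT isT; vmc_EqL e22; rewrite !big_cons big_nil in e22; cbn [fst snd] in e22.
have e23 := inv_eq hA hinv (a:=7) (i:=1) (j:=5) (k:=6) isT isT isT isT isT; vmc_EqL e23; rewrite !big_cons big_nil in e23; cbn [fst snd] in e23.
have e24 := inv_eq hA hinv (a:=7) (i:=2) (j:=3) (k:=5) isT isT isT isT isT; vmc_EqL e24; rewrite !big_cons big_nil in e24; cbn [fst snd] in e24.
have e25 := inv_eq hA hinv (a:=7) (i:=2) (j:=3) (k:=6) isT isT isT isT isT; vmc_EqL e25; rewrite !big_cons big_nil in e25; cbn [fst snd] in e25.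
have e26 := inv_eq hA hinv (a:=7) (i:=2) (j:=4) (k:=5) isT isT isT isT isT; vmc_EqL e26; rewrite !big_cons big_nil in e26; cbn [fst snd] in e26.
have e27 := inv_eq hA hinv (a:=7) (i:=2) (j:=4) (k:=6) isT isT isT isT isT; vmc_EqL e27; rewrite !big_cons big_nil in e27; cbn [fst snd] in e27.
have e28 := inv_eq hA hinv (a:=7) (i:=3) (j:=4) (k:=5) isT isT isT isT isT; vmc_EqL e28; rewrite !big_cons big_nil in e28; cbn [fst snd] in e28.
have e29 := inv_eq hA hinv (a:=7) (i:=3) (j:=4) (k:=6) isT isT isT isT isT; vmc_EqL e29; rewrite !big_cons big_nil in e29; cbn [fst snd] in e29.
apply: all_in. vmc trip35. cbn [foldr]. repeat split.
all: rewrite VPhi //; rewrite !big_cons big_nil; vmc_BZ; cbn [xV]; lra.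
Qed.
End G.

Ltac vmc_WL := repeat match goal with |- context [WL ?a ?b] =>
  let v := eval vm_compute in (WL a b) in rewrite (_ : WL a b = v); last by vm_compute end.
Ltac vmc_WLin H := match type of H with context [WL ?a ?b] =>
  let v := eval vm_compute in (WL a b) in rewrite (_ : WL a b = v) in H; last by vm_compute end.

Definition famcheck : bool := all (fun i => all (fun j => all (fun k =>
  [&& BZ 0 i j k == e3Z 0 2 5 i j k, BZ 3 i j k == e3Z 1 4 6 i j k &
      BZ 4 i j k == 4 * e3Z 0 3 6 i j k + e3Z 1 3 5 i j k + 2 * e3Z 2 3 4 i j k])
  (iota 0 7)) (iota 0 7)) (iota 0 7).
Lemma famcheckT : famcheck. Proof. by vm_compute. Qed.

Definition bZ (a b i j : nat) : int := ((i == a) && (j == b))%:Z + ((i == b) && (j == a))%:Z.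
Definition gKZ (i j : nat) : int := 2 * bZ 3 3 i j - 2 * bZ 2 4 i j + bZ 1 5 i j - 4 * bZ 0 6 i j.
Ltac vmc_gKZ := repeat match goal with |- context [gKZ ?a ?b] =>
  let v := eval vm_compute in (gKZ a b) in rewrite (_ : gKZ a b = v); last by vm_compute end.

Ltac vmc_gKZin H := match type of H with context [gKZ ?a ?b] =>
  let v := eval vm_compute in (gKZ a b) in rewrite (_ : gKZ a b = v) in H; last by vm_compute end.

Section G.
Variable R : realType.
Definition xq (q : R) (n : nat) : R :=
  match n with 0 => q | 3 => q^-1 | 4 => 1 / 2 | _ => 0 end.

Lemma fam_Phi q (i j k : 'I_7) : phi_fam q i j k = Phi (xq q) i j k.
Proof.
have /and3P [/eqP h0 /eqP h3 /eqP h4] := all3P famcheckT (ltn_ord i) (ltn_ord j) (ltn_ord k).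
rewrite /phi_fam !e3_int /Phi !big_cons big_nil.
have -> : xq q 0 = q by []. have -> : xq q 1 = 0 by []. have -> : xq q 2 = 0 by [].
have -> : xq q 3 = q^-1 by []. have -> : xq q 4 = 1 / 2 by [].
rewrite h0 h3 h4; clear h0 h3 h4.
move: (e3Z 0 3 6 i j k) (e3Z 1 3 5 i j k) (e3Z 2 3 4 i j k) (e3Z 0 2 5 i j k) (e3Z 1 4 6 i j k)
  (BZ 1 i j k) (BZ 2 i j k) => a b c d e f g.
rewrite !(intrD, intrM).
move: (q^-1) => qi.
field; done.
Qed.

Lemma compat_ext (g : form2 R) (phi psi : form3 R) :
  (forall i j k, phi i j k = psi i j k) -> compatible g phi -> compatible g psi.
Proof.
move=> H hc mu nu; rewrite -hc; apply: eq_wedge => *; by rewrite /contr H.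
Qed.

Lemma Ds_ext (phi psi : form3 R) :
  (forall i j k, phi i j k = psi i j k) -> Ds_invariant phi -> Ds_invariant psi.
Proof.
move=> H hinv a ha i j k; rewrite -(hinv a ha i j k) /lie_deriv3.
by congr (- _); apply: eq_bigr => l _; rewrite /ext3 !H.
Qed.

Lemma gK_val (i j : 'I_7) : gK R i j = (gKZ i j)%:~R / 2.
Proof.
rewrite /gK /sprod /gKZ /bZ.
rewrite !(intrD, intrB, intrM) -!pmulrn.
field; done.
Qed.

Lemma compat_fam q : q != 0 -> compatible (gK R) (Phi (xq q)).
Proof.
move=> hq mu nu; rewrite wedge_Phi.
case: mu => [[|[|[|[|[|[|[|?]]]]]]] hmu] //; case: nu => [[|[|[|[|[|[|[|?]]]]]]] hnu] //.
all: rewrite gK_val; vmc_gKZ; vmc_WL; rewrite ?big_cons big_nil; cbn [fst snd xq].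
all: field; rewrite ?hq //.
Qed.

Lemma alg (a d e b f : R) : f * f * f = 1 / 8 -> a * e * f = 2 * (d * d * f) ->
  a * b * f + 4 * (d * e * f) = 1 / 2 -> b * d * f = - 2 * (e * e * f) ->
  [/\ d = 0, e = 0, f = 1 / 2 & a * b = 1].
Proof.
move=> c33 c05 c06 c16.
have hf : f = 1 / 2.
  have h : (2 * f - 1) * (4 * f * f + 2 * f + 1) = 0.
    have -> : (2 * f - 1) * (4 * f * f + 2 * f + 1) = 8 * (f * f * f) - 1 by ring.
    rewrite c33; lra.
  move/eqP: h; rewrite mulf_eq0 => /orP [/eqP h|/eqP h]; first lra.
  exfalso; nra.
rewrite hf in c05 c06 c16.
have e1 : a * e = 2 * (d * d) by lra.
have e2 : a * b + 4 * (d * e) = 1 by lra.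
have e3 : b * d = - 2 * (e * e) by lra.
have E : (a * b) * (d * e) = (a * e) * (b * d) by ring.
have hab : a * b = 1 - 4 * (d * e) by lra.
rewrite hab e1 e3 in E.
have hp : d * e = 0.
  have -> : d * e = (1 - 4 * (d * e)) * (d * e) + 4 * ((d * e) * (d * e)) by ring.
  rewrite E; ring.
have [hd he] : d = 0 /\ e = 0.
  move/eqP: hp; rewrite mulf_eq0 => /orP [/eqP hd|/eqP he].
    have : e * e = 0 by rewrite hd in e3; lra.
    by move/eqP; rewrite mulf_eq0 orbb => /eqP.
  have : d * d = 0 by rewrite he in e1; lra.
  by move/eqP; rewrite mulf_eq0 orbb => /eqP.
split => //; lra.
Qed.

Lemma compat_eqs (x : nat -> R) : compatible (gK R) (Phi x) ->
  [/\ x 1%N = 0, x 2%N = 0, x 4%N = 1 / 2 & x 0%N * x 3%N = 1].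
Proof.
move=> hc.
have h33 := hc (inord 3) (inord 3); rewrite wedge_Phi !inordK // in h33; vmc_WLin h33;
  rewrite gK_val !inordK // in h33; vmc_gKZin h33; rewrite ?big_cons big_nil in h33; cbn [fst snd] in h33.
have h05 := hc (inord 0) (inord 5); rewrite wedge_Phi !inordK // in h05; vmc_WLin h05;
  rewrite gK_val !inordK // in h05; vmc_gKZin h05; rewrite ?big_cons big_nil in h05; cbn [fst snd] in h05.
have h06 := hc (inord 0) (inord 6); rewrite wedge_Phi !inordK // in h06; vmc_WLin h06;
  rewrite gK_val !inordK // in h06; vmc_gKZin h06; rewrite ?big_cons big_nil in h06; cbn [fst snd] in h06.
have h16 := hc (inord 1) (inord 6); rewrite wedge_Phi !inordK // in h16; vmc_WLin h16;
  rewrite gK_val !inordK // in h16; vmc_gKZin h16; rewrite ?big_cons big_nil in h16; cbn [fst snd] in h16.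
clear hc.
move: (x 0%N) (x 1%N) (x 2%N) (x 3%N) (x 4%N) h33 h05 h06 h16 => a d e b f h33 h05 h06 h16.
apply: alg; lra.
Qed.

Definition xV' (phi : form3 R) := xV phi.

Theorem main_thm (phi : form3 R) :
  antisym3 phi ->
  (Ds_invariant phi /\ compatible (gK R) phi
   <-> exists q : R, q != 0 /\ (forall i j k, phi i j k = phi_fam q i j k)).
Proof.
move=> hA; split.
- move=> [hinv hcomp].
  have heq : forall i j k, phi i j k = Phi (xV phi) i j k :=
    form_eq hA (Phi_anti (xV phi)) (determine hA hinv).
  have hc : compatible (gK R) (Phi (xV phi)) := compat_ext heq hcomp.
  have [h1 h2 h4 h03] := compat_eqs hc.
  have hq : xV phi 0%N != 0.
    by apply/eqP => h; move: h03; rewrite h mul0r => /eqP; rewrite eq_sym oner_eq0.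
  exists (xV phi 0%N); split => // i j k.
  rewrite heq fam_Phi /Phi !big_cons !big_nil.
  have -> : xq (xV phi 0%N) 0 = xV phi 0%N by [].
  have -> : xq (xV phi 0%N) 1 = 0 by []. have -> : xq (xV phi 0%N) 2 = 0 by [].
  have -> : xq (xV phi 0%N) 3 = (xV phi 0%N)^-1 by [].
  have -> : xq (xV phi 0%N) 4 = 1 / 2 by [].
  have h3 : xV phi 3%N = (xV phi 0%N)^-1 by apply: (mulfI hq); rewrite h03 mulfV.
  by rewrite h1 h2 h3 h4.
- move=> [q [hq hphi]].
  have heq : forall i j k, Phi (xq q) i j k = phi i j k by move=> i j k; rewrite hphi fam_Phi.
  split.
    exact: Ds_ext heq (Ds_inv_Phi (xq q)).
  exact: compat_ext heq (compat_fam hq).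
Qed.
End G.

End Helpers.

Theorem corollary4p4 (R : realType) (phi : form3 R) :
  antisym3 phi ->
  (Ds_invariant phi /\ compatible (gK R) phi
   <-> exists q : R, q != 0 /\ (forall i j k, phi i j k = phi_fam q i j k)).
Proof. exact: (@Helpers.main_thm R phi). Qed.
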